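(* For any integers $n\ge1$ and $0<r\le n$, there is an $r$-covering code $C\subseteq2^n$ with $$|C|=S:=\left\lceil\ln(2)(n+1)\frac{2^n}{V(n,r)}\right\rceil$$ such that for every integer $q\in[r,n]$ and every $\tau\in2^n$, $$|B_q(\tau)\cap C|<S_q:=\left\lceil5(n+1)\frac{V(n,q)}{V(n,r)}\right\rceil.$$
   Context: For $\sigma,\tau\in2^n$, $\Delta(\sigma,\tau)$ is the Hamming distance (number of differing positions), $B_q(\tau)=\{\sigma\in2^n:\Delta(\sigma,\tau)\le q\}$ and $V(n,q)=|B_q(\tau)|=\sum_{i\le q}\binom ni$. A code $C\subseteq2^n$ is $r$-covering if for every $\tau\in2^n$ there is $\sigma\in C$ with $\Delta(\tau,\sigma)\le r$. *)

(* Defs.v *)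
From HB Require Import structures.
From mathcomp Require Import all_boot all_order all_algebra.
From mathcomp Require Import all_classical all_reals all_analysis.
Set Implicit Arguments. Unset Strict Implicit. Unset Printing Implicit Defensive.

Definition word (n : nat) := {ffun 'I_n -> bool}.

Definition hdist (n : nat) (s t : word n) : nat := #|[set i | s i != t i]|.

Definition hball (n q : nat) (tau : word n) : {set word n} :=
  [set s | hdist s tau <= q].

Definition V (n q : nat) : nat := \sum_(i < q.+1) 'C(n, i).

Definition rcovering (n r : nat) (C : {set word n}) : Prop :=
  forall tau : word n, exists2 s, s \in C & hdist tau s <= r.

(* Main.v *)
Require Import Defs.
From HB Require Import structures.
From mathcomp Require Import all_boot all_order all_algebra.
From mathcomp Require Import all_classical all_reals all_analysis.
From mathcomp Require Import zify ring lra.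
Import Order.TTheory GRing.Theory Num.Theory.
Set Implicit Arguments. Unset Strict Implicit. Unset Printing Implicit Defensive.

Lemma card_cover3 (T I J : finType) (X G : {set T}) (P : pred I) (Q : pred J)
  (Y : I -> {set T}) (Z : J -> {set T}) :
  (forall x, x \in X -> [|| x \in G, [exists i, P i && (x \in Y i)] | [exists j, Q j && (x \in Z j)]]) ->
  #|X| <= #|G| + \sum_(i | P i) #|Y i| + \sum_(j | Q j) #|Z j|.
Proof.
move=> H.
have cE (A : {set T}) : #|A| = \sum_x (x \in A : nat).
  by rewrite -sum1_card big_mkcond.
rewrite (cE X) (cE G).
rewrite (eq_bigr _ (fun i _ => cE (Y i))) (eq_bigr _ (fun j _ => cE (Z j))).
rewrite (exchange_big _ _ _ P) (exchange_big _ _ _ Q).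
rewrite -!big_split /=; apply: leq_sum => x _.
case xX: (x \in X) => //=.
have := H x xX; case/or3P => [->|/existsP[i /andP[Pi Yi]]|/existsP[j /andP[Qj Zj]]].
- by rewrite -addnA leq_addr.
- rewrite (bigD1 i) //= Yi; lia.
- rewrite [X in _ <= _ + X](bigD1 j) //= Zj; lia.
Qed.

Lemma bin_le_pow (m N s : nat) : m <= N -> 'C(m, s) * N ^ s <= 'C(N, s) * m ^ s.
Proof.
move=> mN; elim: s => [|s IH]; first by rewrite !bin0.
rewrite -(leq_pmul2l (ltn0Sn s)) !mulnA !mul_bin_left !expnS.
have h : (m - s) * N <= (N - s) * m.
  case: (leqP m s) => ms; first by have -> : m - s = 0 by apply/eqP; rewrite subn_eq0.
  rewrite !mulnBl [m * N]mulnC; apply: leq_sub2l; rewrite leq_mul2l mN orbT //.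
have := leq_mul IH h.
move=> hh; apply: leq_trans (leq_trans _ hh) _.
  by rewrite [X in X <= _](_ : _ = 'C(m, s) * N ^ s * ((m - s) * N)) //; ring.
by rewrite [X in _ <= X](_ : _ = 'C(N, s) * m ^ s * ((N - s) * m)) //; ring.
Qed.

Lemma bin_mul_id (N S k : nat) : k <= S -> S <= N ->
  'C(N, S) * 'C(S, k) = 'C(N, k) * 'C(N - k, S - k).
Proof.
move=> kS SN.
have pos : 0 < k`! * (S - k)`! * (N - S)`! by rewrite !muln_gt0 !fact_gt0.
apply/eqP; rewrite -(eqn_pmul2r pos); apply/eqP.
have e1 := bin_fact kS. have e2 := bin_fact SN.
have kN : k <= N by apply: leq_trans SN.
have e3 := bin_fact kN.
have SkNk : S - k <= N - k by apply: leq_sub2r.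
have e4 := bin_fact SkNk.
have -> : 'C(N, S) * 'C(S, k) * (k`! * (S - k)`! * (N - S)`!) =
   'C(N, S) * ('C(S, k) * (k`! * (S - k)`!)) * (N - S)`! by ring.
rewrite e1 -mulnA e2.
have -> : 'C(N, k) * 'C(N - k, S - k) * (k`! * (S - k)`! * (N - S)`!) =
   'C(N, k) * (k`! * ('C(N - k, S - k) * ((S - k)`! * (N - S)`!))) by ring.
move: e4; rewrite (_ : N - k - (S - k) = N - S); last by lia.
move=> ->; by rewrite e3.
Qed.

Lemma card_word n : #|word n| = 2 ^ n.
Proof. by rewrite card_ffun card_bool card_ord. Qed.

Lemma hdistC n (s t : word n) : hdist s t = hdist t s.
Proof. by rewrite /hdist; apply: eq_card => i; rewrite !inE eq_sym. Qed.

Lemma bad1_le (T : finType) (A : {set T}) S :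
  #|[set C : {set T} | (#|C| == S) && [disjoint C & A]]| <= 'C(#|T| - #|A|, S).
Proof.
rewrite (_ : #|T| - #|A| = #|~: A|); last by rewrite [in RHS]cardsCs finset.setCK.
rewrite -cards_draws; apply: subset_leq_card; apply/fintype.subsetP => C.
rewrite !inE => /andP[-> h]; rewrite andbT.
by rewrite -finset.disjoints_subset.
Qed.

Lemma card_cover1 (T I : finType) (X : {set T}) (P : pred I) (Y : I -> {set T}) :
  (forall x, x \in X -> [exists i, P i && (x \in Y i)]) ->
  #|X| <= \sum_(i | P i) #|Y i|.
Proof.
move=> H.
have cE (A : {set T}) : #|A| = \sum_x (x \in A : nat).
  by rewrite -sum1_card big_mkcond.
rewrite (cE X) (eq_bigr _ (fun i _ => cE (Y i))).
rewrite (exchange_big _ _ _ P); apply: leq_sum => x _.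
case xX: (x \in X) => //=.
have /existsP[i /andP[Pi Yi]] := H x xX.
rewrite (bigD1 i) //= Yi; lia.
Qed.

Lemma super_le (T : finType) (D : {set T}) S :
  #|D| <= S ->
  #|[set C : {set T} | (#|C| == S) && (D \subset C)]| <= 'C(#|T| - #|D|, S - #|D|).
Proof.
move=> DS.
rewrite (_ : #|T| - #|D| = #|~: D|); last by rewrite [in RHS]cardsCs finset.setCK.
rewrite -cards_draws.
set X := [set C | _].
rewrite -(@card_in_imset _ _ (fun C => C :\: D) X); last first.
  move=> C1 C2; rewrite !inE => /andP[_ s1] /andP[_ s2] e.
  apply/finset.setP => x; have := congr1 (fun E : {set T} => x \in E) e; rewrite /= !inE.
  case xD: (x \in D) => /=; last by [].
  by rewrite (fintype.subsetP s1 _ xD) (fintype.subsetP s2 _ xD).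
apply: subset_leq_card; apply/fintype.subsetP => E /imsetP[C CX ->]; move: CX; rewrite /X inE => /andP[/eqP cC DC].
by rewrite inE finset.subsetDr cardsDS // cC eqxx.
Qed.

Lemma bad2_le (T : finType) (B : {set T}) S k : k <= S ->
  #|[set C : {set T} | (#|C| == S) && (k <= #|B :&: C|)]| <= 'C(#|B|, k) * 'C(#|T| - k, S - k).
Proof.
move=> kS.
set Dk := [set D : {set T} | D \subset B & #|D| == k].
apply: (@leq_trans (\sum_(D in Dk) #|[set C : {set T} | (#|C| == S) && (D \subset C)]|)).
  apply: card_cover1 => C; rewrite inE => /andP[cS kBC].
  have : 0 < #|[set D : {set T} | D \subset B :&: C & #|D| == k]|.
    by rewrite cards_draws bin_gt0.
  case/card_gt0P => D; rewrite inE => /andP[DBC /eqP Dk'].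
  apply/existsP; exists D; rewrite !inE Dk' eqxx cS /= andbT.
  have := DBC; rewrite finset.subsetI => /andP[-> ->] //.
rewrite -cards_draws -sum_nat_const; apply: leq_sum => D; rewrite inE => /andP[_ /eqP Dk'].
by rewrite -Dk'; apply: super_le; rewrite Dk'.
Qed.

Lemma card_sized (T : finType) q :
  #|[set A : {set T} | #|A| <= q]| = \sum_(i < q.+1) 'C(#|T|, i).
Proof.
have cE (X : {set {set T}}) : #|X| = \sum_A (A \in X : nat).
  by rewrite -sum1_card big_mkcond.
elim: q => [|q IH].
  rewrite big_ord1 -card_draws; apply: eq_card => A; rewrite !inE leqn0 //.
rewrite big_ord_recr /= -IH -card_draws !cE -big_split /=; apply: eq_bigr => A _.
rewrite !inE leq_eqVlt ltnS; case: (#|A| == q.+1) / eqP => [->|_] /=; last by rewrite addn0.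
by rewrite ltnn.
Qed.

Lemma card_hball n q (tau : word n) : #|hball q tau| = V n q.
Proof.
pose f (s : word n) : {set 'I_n} := [set i | s i != tau i].
have finj : injective f.
  move=> s1 s2 e; apply/ffunP => i.
  have := congr1 (fun E : {set 'I_n} => i \in E) e; rewrite /= !inE.
  by case: (s1 i); case: (s2 i); case: (tau i).
rewrite /V (_ : \sum_(i < q.+1) 'C(n, i) = \sum_(i < q.+1) 'C(#|'I_n|, i)); last by rewrite card_ord.
rewrite -card_sized -(card_imset _ finj).
apply: eq_card => A; apply/imsetP/idP.
  by move=> [s]; rewrite inE /hdist => hs ->; rewrite inE.
rewrite inE => hA.
exists [ffun i => if i \in A then ~~ tau i else tau i].
  by rewrite inE /hdist (_ : [set i | _] = A) //; apply/finset.setP => i; rewrite !inE ffunE; case: (i \in A); case: (tau i).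
by apply/finset.setP => i; rewrite !inE ffunE; case: (i \in A); case: (tau i).
Qed.

Local Open Scope ring_scope.

Lemma expR_ln2 (R : realType) : expR (ln (2 : R)) = 2.
Proof. by rewrite lnK // posrE. Qed.

Lemma expR_ln2n (R : realType) (m : nat) : expR (m%:R * ln (2 : R)) = (2 ^ m)%:R.
Proof. by rewrite expRM_natl expR_ln2 natrX. Qed.

Lemma expR4 (R : realType) : expR (4 : R) <= (2 ^ 8)%N%:R.
Proof.
have h : 2^-1 <= expR (- 2^-1 : R).
  apply: le_trans (expR_ge1Dx _); lra.
have h2 : expR (2^-1 : R) <= 2.
  rewrite -[2^-1 : R]opprK expRN -[X in _ <= X]invrK.
  by rewrite lef_pV2 ?posrE ?expR_gt0 // invr_gt0.
rewrite (_ : (4 : R) = 8%:R * 2^-1); last by field.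
rewrite expRM_natl natrX; apply: lerXn2r => //; rewrite ?nnegrE ?expR_ge0 //.
Qed.

Lemma binom_term (R : realType) (S k : nat) (y : R) : (k <= S)%N -> 0 <= y ->
  'C(S, k)%:R * y ^+ k <= (1 + y) ^+ S.
Proof.
move=> kS y0; rewrite addrC exprD1n.
have kS' : (k < S.+1)%N by [].
rewrite (bigD1 (Ordinal kS')) //= mulrC mulr_natr lerDl.
by apply: sumr_ge0 => i _; rewrite mulrn_wge0 // exprn_ge0.
Qed.

Lemma bound2 (R : realType) (N S v b k n : nat) : (0 < v)%N -> (v <= b)%N -> (b <= N)%N ->
  N = (2 ^ n)%N -> (k <= S)%N -> (S <= N)%N ->
  (S%:R < ln (2:R) * (n.+1)%:R * N%:R / v%:R + 1) ->
  (5 * (n.+1)%:R * b%:R / v%:R <= k%:R :> R) ->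
  ('C(b, k) * 'C(N - k, S - k) * 2 ^ (6 * n.+1) <= 'C(N, S) * 2 ^ 8)%N.
Proof.
move=> v0 vb bN eN kS SN hS hk.
have N0 : (0 < N)%N by rewrite eN expn_gt0.
have hnat : ('C(b, k) * 'C(N - k, S - k) * N ^ k <= 'C(N, S) * 'C(S, k) * b ^ k)%N.
  rewrite bin_mul_id // mulnAC [X in (_ <= X)%N]mulnAC leq_mul2r; apply/orP; right.
  exact: bin_le_pow.
have hN : (0 : R) < N%:R by rewrite ltr0n.
have hv : (0 : R) < v%:R by rewrite ltr0n.
set L := ln (2 : R).
have L0 : 0 < L by rewrite /L ln_gt0 // ltr1n.
set u : R := b%:R / N%:R.
set Q : R := 'C(S, k)%:R * u ^+ k.
have u0 : 0 <= u by rewrite /u divr_ge0.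
have u1 : u <= 1 by rewrite /u ler_pdivrMr // mul1r ler_nat.
have ek : ((2 * k)%N%:R : R) = 2 * k%:R by rewrite natrM.
have en : ((6 * n.+1)%N%:R : R) = 6 * (n.+1)%:R by rewrite natrM.
have hexp : S%:R * (4 * u) - (2 * k)%N%:R * L <= 4 - (6 * n.+1)%N%:R * L.
  set m : R := (n.+1)%:R.
  set t : R := b%:R / v%:R.
  have t1 : 1 <= t by rewrite /t ler_pdivlMr // mul1r ler_nat.
  have m0 : 0 <= m by rewrite /m ler0n.
  have h1 : S%:R * u <= L * m * t + u.
    apply: le_trans (ler_wpM2r u0 (ltW hS)) _.
    rewrite le_eqVlt; apply/orP; left; apply/eqP.
    rewrite /u /t /L /m; field; rewrite !gt_eqF //.
  have h2 : 5 * m * t * L <= k%:R * L.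
    by apply: ler_wpM2r; [exact: ltW | rewrite /t /m mulrA; exact: hk].
  have h3 : m * L <= m * t * L.
    rewrite -mulrA; apply: ler_wpM2l => //; rewrite -[X in X <= _]mul1r; apply: ler_wpM2r => //; exact: ltW.
  lra.
have hQ : Q * (2 ^ (6 * n.+1))%N%:R <= (2 ^ 8)%N%:R.
  have e4 : (4 : R) ^+ k = expR ((2 * k)%N%:R * L).
    by rewrite /L expR_ln2n natrX exprM; congr (_ ^+ _); rewrite expr2; lra.
  have hq1 : Q * expR ((2 * k)%N%:R * L) <= expR (S%:R * (4 * u)).
    rewrite -e4 /Q -mulrA -exprMn [u * 4]mulrC.
    apply: le_trans (binom_term (y := 4 * u) kS _) _; first by rewrite mulr_ge0.
    rewrite expRM_natl; apply: lerXn2r; rewrite ?nnegrE ?expR_ge0 ?addr_ge0 ?mulr_ge0 //.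
    exact: expR_ge1Dx.
  have hq2 : Q <= expR 4 * ((2 ^ (6 * n.+1))%N%:R)^-1.
    rewrite -expR_ln2n -expRN -expRD.
    have ep := expR_gt0 ((2 * k)%N%:R * L).
    rewrite -(ler_pM2r ep) -expRD; apply: le_trans hq1 _.
    by rewrite ler_expR -/L; lra.
  have h2p : (0 : R) < (2 ^ (6 * n.+1))%N%:R by rewrite ltr0n expn_gt0.
  apply: le_trans (ler_wpM2r (ltW h2p) hq2) _.
  by rewrite -mulrA mulVf ?mulr1 ?gt_eqF // expR4.
have hnatR := hnat; move: hnatR; rewrite -(ler_nat R) !natrM !natrX => hnatR.
have hNk : (0 : R) < N%:R ^+ k by rewrite exprn_gt0.
have ha : 'C(b, k)%:R * 'C(N - k, S - k)%:R <= 'C(N, S)%:R * Q :> R.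
  rewrite -(ler_pM2r hNk); apply: le_trans hnatR _.
  by rewrite /Q /u expr_div_n le_eqVlt; apply/orP; left; apply/eqP; field; rewrite gt_eqF // exprn_gt0.
have h2p : (0 : R) < (2 ^ (6 * n.+1))%N%:R by rewrite ltr0n expn_gt0.
have fin : ('C(b, k) * 'C(N - k, S - k) * 2 ^ (6 * n.+1))%N%:R <= ('C(N, S) * 2 ^ 8)%N%:R :> R.
  rewrite (natrM R ('C(b, k) * 'C(N - k, S - k)) (2 ^ (6 * n.+1))) (natrM R 'C(b, k) _).
  rewrite (natrM R 'C(N, S) (2 ^ 8)).
  apply: le_trans (ler_wpM2r (ltW h2p) ha) _.
  by rewrite -mulrA ler_wpM2l // ler0n.
by rewrite ler_nat in fin.
Qed.

Lemma bound1 (R : realType) (N S v n : nat) : (0 < v)%N -> (v <= N)%N -> N = (2 ^ n)%N ->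
  (ln (2 : R) * (n.+1)%:R * N%:R / v%:R <= S%:R) ->
  ('C(N - v, S) * (2 * N) <= 'C(N, S))%N.
Proof.
move=> v0 vN eN hS.
have N0 : (0 < N)%N by rewrite eN expn_gt0.
rewrite -(ler_nat R).
have hN : (0 : R) < N%:R by rewrite ltr0n.
have hv : (0 : R) < v%:R by rewrite ltr0n.
have key : 'C(N - v, S)%:R * N%:R ^+ S <= 'C(N, S)%:R * (N - v)%:R ^+ S :> R.
  by rewrite -!natrX -!natrM ler_nat bin_le_pow // leq_subr.
set p : R := (N - v)%:R / N%:R.
have p0 : 0 <= p by rewrite /p divr_ge0.
have pe : p <= expR (- (v%:R / N%:R)).
  have -> : p = 1 + - (v%:R / N%:R) by rewrite /p natrB //; field; rewrite gt_eqF.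
  exact: expR_ge1Dx.
have hp : p ^+ S <= ((2 ^ n.+1)%:R)^-1.
  apply: (le_trans (lerXn2r S _ _ pe)); rewrite ?nnegrE ?expR_ge0 //.
  rewrite -expRM_natl -expR_ln2n -expRN ler_expR.
  rewrite mulrN lerN2.
  have : ln (2:R) * (n.+1)%:R * N%:R / v%:R * (v%:R / N%:R) <= S%:R * (v%:R / N%:R).
    by rewrite ler_wpM2r // divr_ge0 // ltW.
  have -> : ln (2:R) * (n.+1)%:R * N%:R / v%:R * (v%:R / N%:R) = (n.+1)%:R * ln 2.
    by field; rewrite !gt_eqF.
  done.
have ha : 'C(N - v, S)%:R <= 'C(N, S)%:R * p ^+ S :> R.
  have NS : (0 : R) < N%:R ^+ S by rewrite exprn_gt0.
  rewrite -(ler_pM2r NS) /p expr_div_n mulrA divfK ?gt_eqF //.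
have : 'C(N - v, S)%:R <= 'C(N, S)%:R * ((2 ^ n.+1)%:R)^-1 :> R.
  apply: le_trans ha _; rewrite ler_wpM2l //.
have h2 : (0 : R) < (2 ^ n.+1)%:R by rewrite ltr0n expn_gt0.
move=> h; rewrite natrM (_ : (2 * N)%N = (2 ^ n.+1)%N); last by rewrite eN expnS.
apply: le_trans (ler_wpM2r (ltW h2) h) _; rewrite -mulrA mulVf ?mulr1 ?gt_eqF //.
Qed.

Lemma V_mono n a b : (a <= b)%N -> (V n a <= V n b)%N.
Proof.
move=> ab; pose t : word n := [ffun _ => false].
rewrite -(card_hball a t) -(card_hball b t); apply: subset_leq_card.
by apply/fintype.subsetP => s; rewrite !inE => h; apply: leq_trans h ab.
Qed.

Lemma V_le n q : (V n q <= 2 ^ n)%N.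
Proof. pose t : word n := [ffun _ => false]; by rewrite -(card_hball q t) -card_word max_card. Qed.

Lemma V_ge n r : (0 < r)%N -> (n.+1 <= V n r)%N.
Proof.
move=> r0; apply: leq_trans (V_mono n r0).
by rewrite /V !big_ord_recr big_ord0 /= bin0 bin1 add0n add1n.
Qed.

Lemma ceil_nat (R : realType) (y : R) : 0 <= y ->
  (`|Num.ceil y|%N)%:Z = Num.ceil y /\ y <= (`|Num.ceil y|%N)%:R /\ (`|Num.ceil y|%N)%:R < y + 1.
Proof.
move=> y0.
have c0 : 0 <= Num.ceil y by rewrite ceil_ge0; lra.
have e : (`|Num.ceil y|%N)%:Z = Num.ceil y by rewrite gez0_abs.
have eR : ((`|Num.ceil y|%N)%:R : R) = (Num.ceil y)%:~R by rewrite -e pmulrn.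
split=> //; rewrite eR; split; first exact: ceil_ge.
have := ceilB1_lt y; rewrite intrD; lra.
Qed.

Local Close Scope ring_scope.
Unset Implicit Arguments.

Theorem lemma3p1 (R : realType) (n r : nat) :
  (1 <= n)%N -> (0 < r)%N -> (r <= n)%N ->
  exists C : {set word n},
    @rcovering n r C /\
    (#|C|%:Z = Num.ceil (ln (2 : R) * (n.+1)%:R * (2 ^ n)%:R / (V n r)%:R))%R /\
    (forall q : nat, (r <= q <= n)%N -> forall tau : word n,
       (#|@hball n q tau :&: C|%:Z
          < Num.ceil (5 * (n.+1)%:R * (V n q)%:R / (V n r)%:R : R))%R).
Proof.
move=> n1 r0 rn.
have N0 : (0 < 2 ^ n)%N by rewrite expn_gt0.
have cW : #|word n| = (2 ^ n)%N by rewrite card_word.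
have Vr1 : (n.+1 <= V n r)%N := V_ge n r0.
have Vr0 : (0 < V n r)%N by apply: leq_trans Vr1.
have VrN : (V n r <= 2 ^ n)%N := V_le n r.
have L0 : (0 < ln (2 : R))%R by rewrite ln_gt0 // ltr1n.
have L1 : (ln (2 : R) <= 1)%R.
  have := @le_ln1Dx R 1%R ltac:(lra); rewrite (_ : (1 + 1 : R)%R = 2%R) //; lra.
set x : R := (ln (2 : R) * (n.+1)%:R * (2 ^ n)%:R / (V n r)%:R)%R.
have x0 : (0 <= x)%R.
  by rewrite /x !mulr_ge0 ?invr_ge0 ?ler0n // ltW.
have [eS [xS Sx]] := ceil_nat x0.
set S := `|Num.ceil x|%N in eS xS Sx.
have SN : (S <= 2 ^ n)%N.
  have xN : (x <= (2 ^ n)%:R)%R.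
    rewrite /x ler_pdivrMr ?ltr0n // [X in (_ <= X)%R]mulrC.
    apply: ler_wpM2r; first by rewrite ler0n.
    apply: le_trans (_ : (1 * (n.+1)%:R <= _)%R); first by apply: ler_wpM2r; rewrite ?ler0n.
    by rewrite mul1r ler_nat.
  have : (Num.ceil x <= (2 ^ n)%N%:Z)%R by rewrite ceil_le_int.
  by rewrite -eS lez_nat.
pose kf (q : nat) := `|Num.ceil (5 * (n.+1)%:R * (V n q)%:R / (V n r)%:R : R)%R|%N.
have kfP q : ((kf q)%:Z = Num.ceil (5 * (n.+1)%:R * (V n q)%:R / (V n r)%:R : R))%R /\
     (5 * (n.+1)%:R * (V n q)%:R / (V n r)%:R <= (kf q)%:R :> R)%R.
  have y0 : (0 <= 5 * (n.+1)%:R * (V n q)%:R / (V n r)%:R :> R)%R.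
    by rewrite !mulr_ge0 ?invr_ge0 ?ler0n.
  by have [e1 [e2 _]] := ceil_nat y0.
pose F := [set C : {set word n} | #|C| == S].
pose G := [set C : {set word n} | [&& #|C| == S, [forall tau, ~~ [disjoint C & hball r tau]] &
   [forall q : 'I_n.+1, (r <= q) ==> [forall tau, #|hball q tau :&: C| < kf q]]]].
pose Y (tau : word n) := [set C : {set word n} | (#|C| == S) && [disjoint C & hball r tau]].
pose Z (p : 'I_n.+1 * word n) := [set C : {set word n} | (#|C| == S) && (kf p.1 <= #|hball p.1 p.2 :&: C|)].
have cover := @card_cover3 _ _ _ F G xpredT (fun p : 'I_n.+1 * word n => r <= p.1) Y Z.
have hcov : (#|F| <= #|G| + \sum_(tau : word n) #|Y tau| + \sum_(p : 'I_n.+1 * word n | r <= p.1) #|Z p|)%N.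
  apply: cover => C; rewrite inE => /eqP cS.
  rewrite !inE cS eqxx /=.
  case: (boolP [forall tau, ~~ [disjoint C & hball r tau]]) => /= h1.
    case: (boolP [forall q : 'I_n.+1, (r <= q) ==> [forall tau, #|hball q tau :&: C| < kf q]]) => //= h2.
    apply/orP; right.
    move: h2; rewrite negb_forall => /existsP[q]; rewrite negb_imply => /andP[rq].
    rewrite negb_forall => /existsP[tau]; rewrite -leqNgt => h.
    by apply/existsP; exists (q, tau); rewrite /= rq !inE cS eqxx h.
  apply/orP; left.
  move: h1; rewrite negb_forall => /existsP[tau]; rewrite negbK => h.
  by apply/existsP; exists tau; rewrite !inE cS eqxx h.
have cF : #|F| = 'C(2 ^ n, S) by rewrite card_draws cW.
have hY tau : (#|Y tau| * (2 * 2 ^ n) <= #|F|)%N.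
  apply: leq_trans (leq_mul (bad1_le _ S) (leqnn _)) _.
  rewrite cW card_hball cF; apply: (bound1 (R := R)) => //.
have hZ (p : 'I_n.+1 * word n) : (r <= p.1)%N -> (#|Z p| * 2 ^ (6 * n.+1) <= #|F| * 2 ^ 8)%N.
  case: p => q tau /= rq.
  case: (leqP (kf q) S) => kS.
    rewrite /Z /=; apply: leq_trans (leq_mul (bad2_le (hball q tau) kS) (leqnn _)) _.
    rewrite cW card_hball cF; apply: (bound2 (R := R) (v := V n r)) => //.
    - exact: V_mono.
    - exact: V_le.
    - exact: (proj2 (kfP q)).
  rewrite (_ : #|Z (q, tau)| = 0) //; apply: eq_card0 => C; rewrite !inE; apply/negP => /andP[/eqP cS h].
  have := leq_trans h (subset_leq_card (finset.subsetIr (hball q tau) C)).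
  by rewrite cS leqNgt kS.
have hf : (0 < #|F|)%N by rewrite cF bin_gt0.
set f := #|F| in hcov hY hZ hf.
set E := (2 ^ (6 * n.+1))%N in hZ.
have h1 : ((\sum_(tau : word n) #|Y tau|) * (2 * 2 ^ n) <= 2 ^ n * f)%N.
  rewrite bigop.big_distrl /=.
  apply: leq_trans (_ : _ <= \sum_(tau : word n) f)%N _; first by apply: leq_sum => tau _; exact: hY.
  by rewrite sum_nat_const cW.
have h2 : ((\sum_(p : 'I_n.+1 * word n | r <= p.1) #|Z p|) * E <= (n.+1 * 2 ^ n) * (f * 2 ^ 8))%N.
  rewrite bigop.big_distrl /=.
  apply: leq_trans (_ : _ <= \sum_(p : 'I_n.+1 * word n | r <= p.1) (f * 2 ^ 8))%N _.
    by apply: leq_sum => p rp; exact: hZ.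
  rewrite big_mkcond /=.
  apply: leq_trans (_ : _ <= \sum_(p : 'I_n.+1 * word n) (f * 2 ^ 8))%N _.
    by apply: leq_sum => p _; case: ifP.
  by rewrite sum_nat_const card_prod card_ord cW.
have hE : (2 ^ 9 * (n.+1 * 2 ^ n) < E)%N.
  have : (n.+1 <= 2 ^ n)%N by rewrite ltn_expl.
  move=> h; apply: (@leq_ltn_trans (2 ^ 9 * (2 ^ n * 2 ^ n))).
    by rewrite leq_mul2l leq_mul2r h orbT.
  by rewrite -!expnD /E ltn_exp2l //; lia.
set s1 := \sum_(tau : word n) #|Y tau| in hcov h1.
set s2 := \sum_(p : 'I_n.+1 * word n | r <= p.1) #|Z p| in hcov h2.
set M := (n.+1 * 2 ^ n)%N in h2 hE.
set P := (2 ^ n)%N in h1.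
have P0 : (0 < P)%N by [].
have h1' : (2 * s1 <= f)%N.
  nia.
have hg : (0 < #|G|)%N.
  have a1 := leq_mul hcov (leqnn E).
  have a2 := leq_mul h1' (leqnn E).
  have a3 : (2 ^ 9 * M * f < E * f)%N by rewrite ltn_mul2r hf hE.
  rewrite (_ : (2 ^ 9)%N = 512) // in a3.
  rewrite (_ : (2 ^ 8)%N = 256) // in h2.
  nia.
case/card_gt0P: hg => C; rewrite inE => /and3P[/eqP cS /forallP hcovC /forallP hq].
exists C; split; [|split].
- move=> tau; have := hcovC tau; rewrite -finset.setI_eq0 => /finset.set0Pn[s].
  rewrite inE => /andP[sC sB]; exists s => //; rewrite inE in sB.
  by rewrite hdistC.
- by rewrite cS -eS.
- move=> q /andP[rq qn] tau.
  have qo : (q < n.+1)%N by [].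
  have := hq (Ordinal qo); rewrite /= rq /= => /forallP/(_ tau) h.
  by rewrite -(proj1 (kfP q)) ltz_nat.
Qed.
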